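(* Assume that each bus has either no generator or at least two generators, and that $x^*_n>0$ for all $n$; let $b^*$ be the unique efficient Nash equilibrium, $b^*_n=2a_nx^*_n+c_n$. Consider any execution of the Bid Adjustment Algorithm with $0<\beta_k<2a_n$ for all $n$ and $k\ge1$, and let $a_{\max}=\max_n a_n$. Then for all $k\ge1$, $$\langle b(k+1)-b(k),\,b^*-b(k)\rangle\ \ge\ \frac{\beta_k}{2a_{\max}}\,\|b(k)-b^*\|^2.$$
   Context: Network: directed graph with buses $\{1,\dots,N_b\}$, edge set $\mathcal E$, line flow limits $\bar z_{ij}>0$, $G_i$ the set of generators at bus $i$ (the $G_i$ partition $\{1,\dots,N\}$), loads $y_i\ge0$. Generator $n$ has cost $f_n(x)=a_nx^2+c_nx$, $a_n>0$, $c_n\ge0$. DC-OPF: minimize $\sum_n f_n(x_n)$ over $(x,z)$ s.t. $\sum_{j:(i,j)\in\mathcal E}z_{ij}-\sum_{j:(j,i)\in\mathcal E}z_{ji}=\sum_{n\in G_i}x_n-y_i$ for all $i$, $|z_{ij}|\le\bar z_{ij}$, $x\ge0$; assumed feasible with optimizer $(x^*,z^* )$, $x^*$ unique. S-DC-OPF given bids $b\ge0$: same constraints, objective $\sum_n b_nx_n$. An efficient Nash equilibrium $b^*$ is in particular a bid for which $(x^*,z^* )$ is an optimizer of S-DC-OPF with bids $b^*$ (under the stated assumptions it is unique and equals $2a_nx^*_n+c_n$). $\|\cdot\|$ is the Euclidean norm. Bid Adjustment Algorithm: given stepsizes $\beta_k>0$, each generator picks $b_n(1)\ge c_n$. For each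 $k\ge1$: $q_n(k)=\arg\max_{q\ge0}(b_n(k)q-f_n(q))$; the operator selects an optimizer $(x^{\rm opt}(k),z^{\rm opt}(k))$ of S-DC-OPF with bids $b(k)$; and $b_n(k+1)=[\,b_n(k)+\beta_k(x^{\rm opt}_n(k)-q_n(k))\,]^+$, where $[u]^+=\max\{0,u\}$. *)

(* Defs.v *)
From HB Require Import structures.
From mathcomp Require Import all_boot all_order all_algebra.
Set Implicit Arguments. Unset Strict Implicit. Unset Printing Implicit Defensive.
Import Order.TTheory GRing.Theory Num.Theory.
Local Open Scope ring_scope.

Section DCOPF.
Variables (R : realFieldType) (Nb N : nat).
(* network: directed edge set E on buses 'I_Nb, line limits zbar,
   generator n sits at bus loc n (so G_i = [set n | loc n == i]), loads y *)
Variables (E : {set 'I_Nb * 'I_Nb}) (zbar : 'I_Nb * 'I_Nb -> R)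
          (loc : 'I_N -> 'I_Nb) (y : 'I_Nb -> R).

Definition feasible (x : 'I_N -> R) (z : 'I_Nb * 'I_Nb -> R) : Prop :=
  (forall i : 'I_Nb,
      \sum_(e in E | e.1 == i) z e - \sum_(e in E | e.2 == i) z e
      = \sum_(n | loc n == i) x n - y i)
  /\ (forall e, e \in E -> `|z e| <= zbar e)
  /\ (forall n, 0 <= x n).

Definition gcost (a c : 'I_N -> R) (n : 'I_N) (t : R) : R := a n * t ^+ 2 + c n * t.

Definition dcopf_opt (a c : 'I_N -> R) x z : Prop :=
  feasible x z /\
  forall x' z', feasible x' z' ->
    \sum_n gcost a c n (x n) <= \sum_n gcost a c n (x' n).

Definition sdcopf_opt (b : 'I_N -> R) x z : Prop :=
  feasible x z /\
  forall x' z', feasible x' z' ->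
    \sum_n b n * x n <= \sum_n b n * x' n.
End DCOPF.

Definition is_argmax_profit (R : realFieldType) (f : R -> R) (b q : R) : Prop :=
  0 <= q /\ forall q', 0 <= q' -> b * q' - f q' <= b * q - f q.

Definition pos_part (R : realFieldType) (u : R) : R := Num.max 0 u.

(* Main.v *)
Require Import Defs.
From HB Require Import structures.
From mathcomp Require Import all_boot all_order all_algebra.
From mathcomp Require Import ring lra.
Import Order.TTheory GRing.Theory Num.Theory.
Local Open Scope ring_scope.
Set Implicit Arguments.

Lemma qval (R : realFieldType) (a c b q q0 : R) :
  0 < a -> 0 <= q0 -> 2 * a * q0 = b - c ->
  is_argmax_profit (fun t => a * t ^+ 2 + c * t) b q -> q = q0.
Proof.
move=> ha hq0 hd [hq H]; have := H q0 hq0.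
move=> H1.
have h2 : a * (q - q0) ^+ 2 <= 0 by nra.
have h3 : (q - q0) ^+ 2 = 0.
  apply/eqP; rewrite eq_le sqr_ge0 andbT; nra.
by move/eqP: h3; rewrite sqrf_eq0 subr_eq0 => /eqP.
Qed.

Lemma sum_comb (R : realFieldType) (I : finType) (P : pred I) (f g : I -> R) s t :
  \sum_(i | P i) (s * f i + t * g i) = s * \sum_(i | P i) f i + t * \sum_(i | P i) g i.
Proof. by rewrite big_split /= -!mulr_sumr. Qed.

Lemma feas_comb (R : realFieldType) (Nb N : nat) E zbar (loc : 'I_N -> 'I_Nb) y
  (x x' : 'I_N -> R) (z z' : 'I_Nb * 'I_Nb -> R) (t : R) :
  0 <= t <= 1 -> feasible E zbar loc y x z -> feasible E zbar loc y x' z' ->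
  feasible E zbar loc y (fun n => (1 - t) * x n + t * x' n)
    (fun e => (1 - t) * z e + t * z' e).
Proof.
move=> /andP[t0 t1] [b1 [l1 p1]] [b2 [l2 p2]]; split; [|split].
- move=> i; rewrite !(@sum_comb _ _ (fun e => (e \in E) && (e.1 == i)))
    !(@sum_comb _ _ (fun e => (e \in E) && (e.2 == i))) (@sum_comb _ _ (fun n => loc n == i)).
  have := b1 i; have := b2 i => h2 h1.
  transitivity ((1 - t) * (\sum_(e in E | e.1 == i) z e - \sum_(e in E | e.2 == i) z e)
     + t * (\sum_(e in E | e.1 == i) z' e - \sum_(e in E | e.2 == i) z' e)); first by ring.
  rewrite h1 h2; ring.
- move=> e he; have := l1 e he; have := l2 e he; rewrite !ler_norml.
  move=> /andP[u1 u2] /andP[v1 v2]; apply/andP; split; nra.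
- move=> n; have := p1 n; have := p2 n; nra.
Qed.

Lemma lin_opt (R : realFieldType) (Nb N : nat) E zbar (loc : 'I_N -> 'I_Nb) y
  (a c : 'I_N -> R) xs zs x' z' :
  (forall n, 0 < a n) ->
  dcopf_opt E zbar loc y a c xs zs -> feasible E zbar loc y x' z' ->
  0 <= \sum_n (2 * a n * xs n + c n) * (x' n - xs n).
Proof.
move=> ha [fs opt] f'.
set S := \sum_n _.
set A := \sum_n a n * (x' n - xs n) ^+ 2.
have A0 : 0 <= A by apply: sumr_ge0 => n _; apply: mulr_ge0; [exact: ltW|exact: sqr_ge0].
have key : forall t, 0 <= t <= 1 -> 0 <= t * S + t ^+ 2 * A.
  move=> t ht; have := opt _ _ (@feas_comb _ _ _ _ _ _ _ _ _ _ _ t ht fs f').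
  rewrite -subr_ge0 -sumrB /S /A mulr_sumr mulr_sumr -big_split /=.
  congr (0 <= _); apply: eq_bigr => n _; rewrite /gcost; ring.
rewrite leNgt; apply/negP => hS.
set p := - S.
have p0 : 0 < p by rewrite /p oppr_gt0.
set D := A + p.
have D0 : 0 < D by rewrite /D; lra.
set t := p / D.
have tD : t * D = p by rewrite /t mulfVK // gt_eqF.
have t0 : 0 < t by rewrite /t divr_gt0.
have t1 : t <= 1 by rewrite /t ler_pdivrMr // mul1r /D; lra.
have h : 0 <= t * S + t ^+ 2 * A by apply: key; rewrite t1 ltW.
have : t * S + t ^+ 2 * A = - (t ^+ 2 * p).
  have -> : S = - p by rewrite /p opprK.
  have -> : A = D - p by rewrite /D; ring.
  rewrite -tD; ring.
move=> e; rewrite e in h.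
have : 0 < t ^+ 2 * p by rewrite mulr_gt0 // exprn_gt0.
lra.
Qed.

Unset Implicit Arguments.
Theorem lemma4p3 (R : realFieldType) (Nb N : nat)
  (E : {set 'I_Nb * 'I_Nb}) (zbar : 'I_Nb * 'I_Nb -> R)
  (loc : 'I_N -> 'I_Nb) (y : 'I_Nb -> R) (a c : 'I_N -> R)
  (xs : 'I_N -> R) (zs : 'I_Nb * 'I_Nb -> R)
  (b : nat -> 'I_N -> R) (beta : nat -> R) (q : nat -> 'I_N -> R)
  (xopt : nat -> 'I_N -> R) (zopt : nat -> 'I_Nb * 'I_Nb -> R) :
  (forall e, e \in E -> 0 < zbar e) ->
  (forall i, 0 <= y i) ->
  (forall n, 0 < a n) ->
  (forall n, 0 <= c n) ->
  dcopf_opt E zbar loc y a c xs zs ->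
  (forall x z, dcopf_opt E zbar loc y a c x z -> x = xs) ->
  (* each bus has no generator or at least two *)
  (forall i : 'I_Nb, #|[set n | loc n == i]| != 1%N) ->
  (forall n, 0 < xs n) ->
  (* Bid Adjustment Algorithm *)
  (forall k, (1 <= k)%N -> forall n, 0 < beta k < 2 * a n) ->
  (forall n, c n <= b 1%N n) ->
  (forall k, (1 <= k)%N -> forall n,
      is_argmax_profit (gcost a c n) (b k n) (q k n)) ->
  (forall k, (1 <= k)%N -> sdcopf_opt E zbar loc y (b k) (xopt k) (zopt k)) ->
  (forall k, (1 <= k)%N -> forall n,
      b k.+1 n = pos_part (b k n + beta k * (xopt k n - q k n))) ->
  let bs := fun n => 2 * a n * xs n + c n in
  let amax := \big[Num.max/0]_n a n in
  forall k, (1 <= k)%N ->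
    \sum_n (b k.+1 n - b k n) * (bs n - b k n)
      >= beta k / (2 * amax) * \sum_n (b k n - bs n) ^+ 2.
Proof.
move=> _ _ ha hc hopt _ _ _ hbeta hb1 hq hsd hupd bs amax.
have qE : forall k, (1 <= k)%N -> forall n, c n <= b k n ->
    q k n = (b k n - c n) / (2 * a n).
  move=> k hk n hbc; apply: (@qval _ (a n) (c n) (b k n)).
  - exact: ha.
  - apply: divr_ge0; [by rewrite subr_ge0|by have := ha n; lra].
  - by rewrite mulrC divfK // mulf_neq0 ?gt_eqF.
  - exact: hq.
have step : forall k, (1 <= k)%N -> (forall n, c n <= b k n) -> forall n,
    c n <= b k n + beta k * (xopt k n - q k n).
  move=> k hk hbk n.
  have hxo : 0 <= xopt k n by case: (hsd _ hk) => [[_ [_ h]] _]; exact: h.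
  have := hbeta _ hk n => /andP[b0 b2].
  have an0 : 0 < a n := ha n.
  have e := qE _ hk n (hbk n).
  rewrite e.
  have : beta k * ((b k n - c n) / (2 * a n)) <= b k n - c n.
    rewrite mulrA ler_pdivrMr; last by lra.
    have := hbk n; nra.
  have : 0 <= beta k * xopt k n by apply: mulr_ge0 => //; lra.
  lra.
have inv0 : forall k, (1 <= k)%N -> forall n, c n <= b k n.
  elim=> [//|k IH] hk n.
  case: k IH hk => [|k] IH hk; first exact: hb1.
  have IH' := IH isT.
  rewrite hupd // /pos_part.
  have := step k.+1 isT IH' n; have := hc n; move=> h1 h2.
  by rewrite le_max h2 orbT.
have inv : forall k, (1 <= k)%N -> forall n,
    c n <= b k n /\ b k.+1 n = b k n + beta k * (xopt k n - q k n).
  move=> k hk n; split; first exact: inv0.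
  rewrite hupd // /pos_part; apply/max_idPr.
  have := step _ hk (inv0 _ hk) n; have := hc n; lra.
move=> k hk.
have amaxge : forall n, a n <= amax.
  move=> n; rewrite /amax (bigD1 n) //= le_max lexx //.
have mono : 0 <= \sum_n (xopt k n - xs n) * (bs n - b k n).
  have h1 : 0 <= \sum_n bs n * (xopt k n - xs n).
    case: (hsd _ hk) => f _; exact: (lin_opt ha hopt f).
  have h2 : 0 <= \sum_n b k n * (xs n - xopt k n).
    case: (hsd _ hk) => _ o; have := o _ _ (proj1 hopt).
    rewrite -subr_ge0 -sumrB => h; apply: (le_trans h).
    by rewrite le_eqVlt; apply/orP; left; apply/eqP; apply: eq_bigr => n _; ring.
  have -> : \sum_n (xopt k n - xs n) * (bs n - b k n) =
    \sum_n bs n * (xopt k n - xs n) + \sum_n b k n * (xs n - xopt k n).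
    by rewrite -big_split; apply: eq_bigr => n _ /=; ring.
  by rewrite addr_ge0.
have d2 : forall n, (bs n - b k n) ^+ 2 / (2 * amax) <= (bs n - b k n) ^+ 2 / (2 * a n).
  move=> n; apply: ler_wpM2l; first exact: sqr_ge0.
  have := ha n; have := amaxge n => h1 h2.
  rewrite lef_pV2 ?posrE; lra.
have LHS : \sum_n (b k.+1 n - b k n) * (bs n - b k n) =
   beta k * (\sum_n (xopt k n - xs n) * (bs n - b k n) + \sum_n (bs n - b k n) ^+ 2 / (2 * a n)).
  rewrite -big_split mulr_sumr; apply: eq_bigr => n _ /=.
  have [hbc hu] := inv _ hk n.
  rewrite hu (qE _ hk n hbc) /bs.
  have an : a n != 0 by have := ha n; rewrite lt0r => /andP[].
  by field.
have RHS : beta k / (2 * amax) * \sum_n (b k n - bs n) ^+ 2 =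
   beta k * \sum_n (bs n - b k n) ^+ 2 / (2 * amax).
  rewrite mulr_sumr mulr_sumr; apply: eq_bigr => n _; rewrite -sqrrN opprB; ring.
rewrite LHS RHS.
case: (pickP (fun n : 'I_N => true)) => [n0 _|h0].
  have b0 : 0 < beta k by have := hbeta _ hk n0; lra.
  apply: ler_wpM2l; first exact: ltW.
  rewrite -(addr0 (\sum_n _ / _)) addrC; apply: lerD => //.
  by apply: ler_sum => n _; exact: d2.
by rewrite !big_pred0 // addr0.
Qed.
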